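(* Let $W\in\mathbb{R}^{n\times n}$ be a symmetric positive definite matrix, $T\in\mathbb{R}^{n\times n}$ a symmetric positive semi-definite matrix, and suppose $A=W+iT\in\mathbb{C}^{n\times n}$ (with $i=\sqrt{-1}$) is non-singular. Let $b\in\mathbb{C}^n$, $\alpha>0$ and $0\le\omega<2$. Consider the GADI iteration: starting from an initial vector $x^{(0)}\in\mathbb{C}^n$, for $k=0,1,2,\dots$, $$(\alpha I+W)x^{(k+\frac12)} = (\alpha I - iT)x^{(k)} + b,$$ $$(\alpha I + iT)x^{(k+1)} = \big(iT - (1-\omega)\alpha I\big)x^{(k)} + (2-\omega)\alpha\, x^{(k+\frac12)}.$$ Then the sequence $\{x^{(k)}\}$ converges to the unique exact solution $x\in\mathbb{C}^n$ of $Ax=b$. *)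

(* Defs.v *)
From HB Require Import structures.
From mathcomp Require Import all_boot all_order all_algebra.
From mathcomp Require Import complex.
From mathcomp Require Import all_classical all_reals all_analysis.
Set Implicit Arguments. Unset Strict Implicit. Unset Printing Implicit Defensive.
Import Order.TTheory GRing.Theory Num.Theory.
Import numFieldNormedType.Exports.
Local Open Scope ring_scope.
Local Open Scope classical_set_scope.

Definition sym_posdef (R : realType) (n : nat) (M : 'M[R]_n) : Prop :=
  M^T = M /\ forall v : 'cV[R]_n, v != 0 -> 0 < (v^T *m M *m v) 0 0.

Definition sym_possemidef (R : realType) (n : nat) (M : 'M[R]_n) : Prop :=
  M^T = M /\ forall v : 'cV[R]_n, 0 <= (v^T *m M *m v) 0 0.

Definition cmx (R : realType) (m n : nat) (M : 'M[R]_(m, n)) : 'M[R[i]]_(m, n) :=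
  map_mx (fun r : R => (r%:C)%C) M.

(* convergence of a sequence of complex vectors (entrywise, in real and imaginary parts;
   equivalent to convergence in any norm on C^n) *)
Definition cvg_cvec (R : realType) (n : nat) (x : nat -> 'cV[R[i]]_n) (l : 'cV[R[i]]_n) : Prop :=
  forall j : 'I_n,
    ((fun k => complex.Re (x k j 0)) @ \oo --> complex.Re (l j 0))%classic /\
    ((fun k => complex.Im (x k j 0)) @ \oo --> complex.Im (l j 0))%classic.

(* Main.v *)
Require Import Defs.
From HB Require Import structures.
From mathcomp Require Import all_boot all_order all_algebra.
From mathcomp Require Import complex.
From mathcomp Require Import all_classical all_reals all_analysis.
From mathcomp Require Import ring lra.
Import Order.TTheory GRing.Theory Num.Theory.
Local Open Scope ring_scope.

Section Dot.
Variables (R : realType) (n : nat).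
Implicit Types u v w : 'cV[R]_n.
Definition dot u v : R := \sum_j u j 0 * v j 0.

Lemma dotC u v : dot u v = dot v u.
Proof. by apply: eq_bigr => j _; rewrite mulrC. Qed.
Lemma dotDl u v w : dot (u + v) w = dot u w + dot v w.
Proof. by rewrite /dot -big_split; apply: eq_bigr => j _; rewrite mxE mulrDl. Qed.
Lemma dotNl u w : dot (- u) w = - dot u w.
Proof. by rewrite /dot -sumrN; apply: eq_bigr => j _; rewrite mxE mulNr. Qed.
Lemma dotBl u v w : dot (u - v) w = dot u w - dot v w.
Proof. by rewrite dotDl dotNl. Qed.
Lemma dotZl a u w : dot (a *: u) w = a * dot u w.
Proof. by rewrite /dot mulr_sumr; apply: eq_bigr => j _; rewrite mxE mulrA. Qed.
Lemma dotDr u v w : dot w (u + v) = dot w u + dot w v.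
Proof. by rewrite !(dotC w) dotDl. Qed.
Lemma dotBr u v w : dot w (u - v) = dot w u - dot w v.
Proof. by rewrite !(dotC w) dotBl. Qed.
Lemma dotNr u w : dot w (- u) = - dot w u.
Proof. by rewrite !(dotC w) dotNl. Qed.
Lemma dotZr a u w : dot w (a *: u) = a * dot w u.
Proof. by rewrite !(dotC w) dotZl. Qed.
Lemma dot_ge0 u : 0 <= dot u u.
Proof. by apply: sumr_ge0 => j _; rewrite -expr2 sqr_ge0. Qed.
Lemma dot_entry u j : u j 0 ^+ 2 <= dot u u.
Proof.
rewrite /dot (bigD1 j) //= -expr2 lerDl.
by apply: sumr_ge0 => i _; rewrite -expr2 sqr_ge0.
Qed.
Lemma dot_sym (T : 'M[R]_n) u v : T^T = T -> dot u (T *m v) = dot v (T *m u).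
Proof.
move=> hT; rewrite /dot.
under eq_bigr => i _ do rewrite mxE big_distrr /=.
under [RHS]eq_bigr => i _ do rewrite mxE big_distrr /=.
rewrite exchange_big /=; apply: eq_bigr => i _; apply: eq_bigr => j _.
by rewrite -{1}hT mxE; ring.
Qed.
Lemma dot_quad (W : 'M[R]_n) v : (v^T *m W *m v) 0 0 = dot v (W *m v).
Proof. by rewrite -mulmxA mxE; apply: eq_bigr => j _; rewrite mxE. Qed.
End Dot.
Arguments dot {R n}.
Arguments dotC {R n}. Arguments dotDl {R n}. Arguments dotNl {R n}. Arguments dotBl {R n}.
Arguments dotZl {R n}. Arguments dotDr {R n}. Arguments dotBr {R n}. Arguments dotNr {R n}.
Arguments dotZr {R n}. Arguments dot_ge0 {R n}. Arguments dot_entry {R n}.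
Arguments dot_sym {R n}. Arguments dot_quad {R n}.

Section Energy.
Variables (R : realType) (n : nat).
Implicit Types u v w x y : 'cV[R]_n.

Definition dotE := (@dotDl R n, @dotDr R n, @dotBl R n, @dotBr R n, @dotZl R n, @dotZr R n, @dotNl R n, @dotNr R n).

Lemma conv_dot x y (s t : R) : 0 <= s -> 0 <= t ->
  dot (s *: x + t *: y) (s *: x + t *: y) <= (s + t) * (s * dot x x + t * dot y y).
Proof.
move=> hs ht; have h := mulr_ge0 (mulr_ge0 hs ht) (dot_ge0 (x - y)).
move: h; rewrite !dotE (dotC y x); nra.
Qed.

Lemma dot_pm (W : 'M[R]_n) (al : R) p :
  dot (al *: p - W *m p) (al *: p - W *m p) + 4 * al * dot p (W *m p)
  = dot (al *: p + W *m p) (al *: p + W *m p).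
Proof. rewrite !dotE (dotC (W *m p) p); ring. Qed.

Lemma dot_FG (T : 'M[R]_n) (al : R) a b : T^T = T ->
  dot (al *: a + T *m b) (al *: a + T *m b) + dot (al *: b - T *m a) (al *: b - T *m a)
  = dot (al *: a - T *m b) (al *: a - T *m b) + dot (al *: b + T *m a) (al *: b + T *m a).
Proof.
move=> hT; rewrite !dotE (dotC (T *m b) a) (dotC (T *m a) b) (dot_sym T b a hT); ring.
Qed.

Definition SF (T : 'M[R]_n) (al : R) a b :=
  dot (al *: a - T *m b) (al *: a - T *m b) + dot (al *: b + T *m a) (al *: b + T *m a).

Lemma energy (W T : 'M[R]_n) (hT : T^T = T) (al om : R) (a b p q a' b' : 'cV[R]_n)
 (E1 : al *: p + W *m p = al *: a + T *m b)
 (E2 : al *: q + W *m q = al *: b - T *m a)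
 (E3 : al *: a' - T *m b' = - (T *m b) - ((1-om)*al) *: a + ((2-om)*al) *: p)
 (E4 : al *: b' + T *m a' = T *m a - ((1-om)*al) *: b + ((2-om)*al) *: q)
 (hom0 : 0 <= om) (hom2 : om <= 2) :
 SF T al a' b' <= SF T al a b - 2 * (2 - om) * al * (dot p (W *m p) + dot q (W *m q)).
Proof.
have Wp : W *m p = al *: a + T *m b - al *: p by rewrite -E1 addrC addKr.
have Wq : W *m q = al *: b - T *m a - al *: q by rewrite -E2 addrC addKr.
have F1 : 2 *: (al *: a' - T *m b') =
   om *: (al *: a - T *m b) + (2 - om) *: (al *: p - W *m p).
  by rewrite E3 Wp; apply/matrixP => i j; rewrite !mxE; ring.
have F2 : 2 *: (al *: b' + T *m a') =
   om *: (al *: b + T *m a) + (2 - om) *: (al *: q - W *m q).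
  by rewrite E4 Wq; apply/matrixP => i j; rewrite !mxE; ring.
have c1 := conv_dot (al *: a - T *m b) (al *: p - W *m p) om (2 - om) hom0 (ltac:(by rewrite subr_ge0)).
have c2 := conv_dot (al *: b + T *m a) (al *: q - W *m q) om (2 - om) hom0 (ltac:(by rewrite subr_ge0)).
rewrite -F1 -F2 !dotZl !dotZr in c1 c2.
have hp := dot_pm W al p. have hq := dot_pm W al q.
rewrite E1 in hp; rewrite E2 in hq.
have hFG := dot_FG T al a b hT.
rewrite /SF.
have e : om + (2 - om) = 2 by ring.
rewrite e in c1 c2.
nra.
Qed.
End Energy.

Section ReIm.
Variables (R : realType).
Local Notation C := R[i].

Lemma ReD (x y : C) : complex.Re (x + y) = complex.Re x + complex.Re y.
Proof. by case: x; case: y. Qed.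
Lemma ImD (x y : C) : complex.Im (x + y) = complex.Im x + complex.Im y.
Proof. by case: x; case: y. Qed.
Lemma ReN (x : C) : complex.Re (- x) = - complex.Re x.
Proof. by case: x. Qed.
Lemma ImN (x : C) : complex.Im (- x) = - complex.Im x.
Proof. by case: x. Qed.
Lemma ReM (x y : C) : complex.Re (x * y) = complex.Re x * complex.Re y - complex.Im x * complex.Im y.
Proof. by case: x; case: y. Qed.
Lemma ImM (x y : C) : complex.Im (x * y) = complex.Re x * complex.Im y + complex.Im x * complex.Re y.
Proof. by case: x => a b; case: y => c d /=; ring. Qed.
Lemma Re_sum (I : Type) (r : seq I) (F : I -> C) :
  complex.Re (\sum_(k <- r) F k) = \sum_(k <- r) complex.Re (F k).
Proof. by elim: r => [|x r IH]; rewrite ?big_nil ?big_cons ?ReD ?IH. Qed.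
Lemma Im_sum (I : Type) (r : seq I) (F : I -> C) :
  complex.Im (\sum_(k <- r) F k) = \sum_(k <- r) complex.Im (F k).
Proof. by elim: r => [|x r IH]; rewrite ?big_nil ?big_cons ?ImD ?IH. Qed.

Variables (m k : nat).
Definition re (v : 'M[C]_(m, k)) : 'M[R]_(m, k) := map_mx (@complex.Re R) v.
Definition im (v : 'M[C]_(m, k)) : 'M[R]_(m, k) := map_mx (@complex.Im R) v.

Lemma reD u v : re (u + v) = re u + re v.
Proof. by apply/matrixP => i j; rewrite !mxE ReD. Qed.
Lemma imD u v : im (u + v) = im u + im v.
Proof. by apply/matrixP => i j; rewrite !mxE ImD. Qed.
Lemma reB u v : re (u - v) = re u - re v.
Proof. by apply/matrixP => i j; rewrite !mxE ReD ReN. Qed.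
Lemma imB u v : im (u - v) = im u - im v.
Proof. by apply/matrixP => i j; rewrite !mxE ImD ImN. Qed.
Lemma reN u : re (- u) = - re u.
Proof. by apply/matrixP => i j; rewrite !mxE ReN. Qed.
Lemma imN u : im (- u) = - im u.
Proof. by apply/matrixP => i j; rewrite !mxE ImN. Qed.
Lemma reZ (c : R) u : re ((c%:C)%C *: u) = c *: re u.
Proof. by apply/matrixP => i j; rewrite !mxE ReM /= mul0r subr0. Qed.
Lemma imZ (c : R) u : im ((c%:C)%C *: u) = c *: im u.
Proof. by apply/matrixP => i j; rewrite !mxE ImM /= mul0r addr0. Qed.
Lemma reI u : re ('i%C *: u) = - im u.
Proof. by apply/matrixP => i j; rewrite !mxE ReM /= mul0r mul1r sub0r. Qed.
Lemma imI u : im ('i%C *: u) = re u.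
Proof. by apply/matrixP => i j; rewrite !mxE ImM /= mul0r mul1r add0r. Qed.
Lemma reS (c : R) (u : 'M[C]_(m, k)) : re ((c%:C)%C%:M *m u) = c *: re u.
Proof. by rewrite mul_scalar_mx reZ. Qed.
Lemma imS (c : R) (u : 'M[C]_(m, k)) : im ((c%:C)%C%:M *m u) = c *: im u.
Proof. by rewrite mul_scalar_mx imZ. Qed.
End ReIm.
Arguments re {R m k}. Arguments im {R m k}.
Arguments reD {R m k}. Arguments imD {R m k}. Arguments reB {R m k}. Arguments imB {R m k}.
Arguments reZ {R m k}. Arguments imZ {R m k}. Arguments reI {R m k}. Arguments imI {R m k}.
Arguments reS {R m k}. Arguments reN {R m k}. Arguments imN {R m k}. Arguments imS {R m k}.

Lemma re_cmx (R : realType) (m p k : nat) (M : 'M[R]_(m, p)) (u : 'M[R[i]]_(p, k)) :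
  re (cmx M *m u) = M *m re u.
Proof.
apply/matrixP => i j; rewrite !mxE Re_sum; apply: eq_bigr => l _.
by rewrite !mxE ReM /= mul0r subr0.
Qed.
Lemma im_cmx (R : realType) (m p k : nat) (M : 'M[R]_(m, p)) (u : 'M[R[i]]_(p, k)) :
  im (cmx M *m u) = M *m im u.
Proof.
apply/matrixP => i j; rewrite !mxE Im_sum; apply: eq_bigr => l _.
by rewrite !mxE ImM /= mul0r addr0.
Qed.

Import numFieldNormedType.Exports.
Local Open Scope classical_set_scope.

Section An.
Variable R : realType.
Implicit Types u v : nat -> R.

Lemma cvg0_sq u : (fun k => u k ^+ 2) @ \oo --> (0:R) -> u @ \oo --> (0:R).
Proof.
move=> h.
have h2 : (Num.sqrt \o (fun k => u k ^+ 2)) @ \oo --> Num.sqrt (0:R).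
  by apply: continuous_cvg => //; exact: sqrt_continuous.
rewrite sqrtr0 in h2.
apply: norm_cvg0; apply: cvg_trans h2; apply: near_eq_cvg; apply: nearW => k /=.
by rewrite sqrtr_sqr.
Qed.

Lemma cvg0_squeeze u v : (forall k, 0 <= u k <= v k) -> v @ \oo --> (0:R) -> u @ \oo --> (0:R).
Proof.
move=> huv hv.
apply: (@squeeze_cvgr _ _ _ _ (fun=> 0) v u _ 0 (cvg_cst _) hv).
exact: nearW.
Qed.

Lemma cvg_sum_seq (I : Type) (r : seq I) (F : I -> nat -> R) (l : I -> R) :
  (forall j, F j @ \oo --> l j) ->
  (fun k => \sum_(j <- r) F j k) @ \oo --> \sum_(j <- r) l j.
Proof.
move=> hF; elim: r => [|x r IH].
  rewrite big_nil; under eq_fun do rewrite big_nil; exact: cvg_cst.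
rewrite big_cons; under eq_fun do rewrite big_cons.
exact: cvgD.
Qed.

Lemma cvg0_lin (n m : nat) (M : 'M[R]_(m, n)) (w : nat -> 'cV[R]_n) (i : 'I_m) :
  (forall j, (fun k => w k j 0) @ \oo --> (0:R)) ->
  (fun k => (M *m w k) i 0) @ \oo --> (0:R).
Proof.
move=> h.
have := @cvg_sum_seq _ (index_enum 'I_n) (fun j k => M i j * w k j 0) (fun j => M i j * 0)
  (fun j => @cvgMl_tmp _ _ _ _ _ (M i j) _ (h j)).
rewrite big1 => [hc|j _]; last by rewrite mulr0.
have e : (fun k => (M *m w k) i 0) = (fun k => \sum_(j <- index_enum 'I_n) M i j * w k j 0).
  by apply/funext => k; rewrite mxE.
by rewrite e; exact: hc.
Qed.

Lemma cvg0_energy (S P : nat -> R) (c : R) : 0 < c ->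
  (forall k, 0 <= S k) -> (forall k, 0 <= P k) ->
  (forall k, S k.+1 <= S k - c * P k) -> P @ \oo --> (0:R).
Proof.
move=> c0 S0 P0 hS.
have dec : nonincreasing_seq S.
  apply/nonincreasing_seqP => k; have := hS k; have := P0 k.
  have := mulr_ge0 (ltW c0) (P0 k); lra.
have lb : has_lbound (range S) by exists 0 => _ [k _ <-].
have cS := nonincreasing_cvgn dec lb.
have cS1 : (fun k => S k.+1) @ \oo --> inf (S @` setT).
  by rewrite -[X in X @ _ --> _]/([sequence S n.+1]_n) cvg_shiftS.
have hd : (fun k => (S k - S k.+1) / c) @ \oo --> (0:R).
  have := @cvgMr_tmp _ _ _ _ _ _ (c^-1) (cvgB cS cS1); rewrite subrr mul0r; exact.
apply: (cvg0_squeeze _ _ _ hd) => k; rewrite P0 /= ler_pdivlMr // mulrC.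
by have := hS k; lra.
Qed.
Lemma cvg0_scale (c : R) u : u @ \oo --> (0:R) -> (fun k => c * u k) @ \oo --> (0:R).
Proof. move=> h; have := @cvgMl_tmp _ _ _ _ _ c _ h; rewrite mulr0 => hh; exact: hh. Qed.
Lemma cvg0_add u v : u @ \oo --> (0:R) -> v @ \oo --> (0:R) -> (fun k => u k + v k) @ \oo --> (0:R).
Proof. move=> hu hv; have := cvgD hu hv; rewrite addr0 => hh; exact: hh. Qed.
Lemma cvg0_sqr u : u @ \oo --> (0:R) -> (fun k => u k ^+ 2) @ \oo --> (0:R).
Proof.
move=> hu; have := cvgM hu hu; rewrite mulr0 => hh.
have e : (fun k => u k ^+ 2) = (u \* u) by apply/funext => k; rewrite expr2.
by rewrite e; exact: hh.
Qed.
Lemma cvg_add_cst (c : R) u : u @ \oo --> (0:R) -> (fun k => c + u k) @ \oo --> c.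
Proof. move=> hu; have := cvgD (cvg_cst c) hu; rewrite addr0 => hh; exact: hh. Qed.
End An.

Section PD.
Variables (R : realType) (n : nat) (W : 'M[R]_n) (hW : sym_posdef W).

Lemma dot0l (w : 'cV[R]_n) : dot 0 w = 0.
Proof. by rewrite /dot big1 // => j _; rewrite mxE mul0r. Qed.

Lemma psd (v : 'cV[R]_n) : 0 <= dot v (W *m v).
Proof.
case: (v =P 0) => [->|/eqP nz]; first by rewrite dot0l.
by have := hW.2 v nz; rewrite dot_quad => /ltW.
Qed.

Lemma cs (u v : 'cV[R]_n) : 0 < dot u (W *m u) ->
  dot u (W *m v) ^+ 2 <= dot u (W *m u) * dot v (W *m v).
Proof.
move=> hu.
set Pu := dot u (W *m u); set Pv := dot v (W *m v); set B := dot u (W *m v).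
pose s := - B / Pu.
have h0 := psd (v + s *: u).
have e : dot (v + s *: u) (W *m (v + s *: u)) = Pv + 2 * s * B + s ^+ 2 * Pu.
  rewrite mulmxDr -scalemxAr dotDl !dotDr !dotZl !dotZr.
  rewrite (dot_sym W v u hW.1) -/Pu -/Pv -/B; ring.
rewrite e in h0.
have h1 := mulr_ge0 (ltW hu) h0.
have e2 : Pu * (Pv + 2 * s * B + s ^+ 2 * Pu) = Pu * Pv - B ^+ 2.
  by rewrite /s; field; rewrite gt_eqF.
rewrite e2 in h1; lra.
Qed.

Lemma posdef_unit : W \in unitmx.
Proof.
rewrite unitmxE unitfE; apply/negP => /det0P [v nz hv].
have nzT : v^T != 0.
  by apply: contra nz => /eqP h; apply/eqP; apply: trmx_inj; rewrite h trmx0.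
have := hW.2 _ nzT; rewrite trmxK hv mul0mx mxE ltxx //.
Qed.

Definition ev (j : 'I_n) : 'cV[R]_n := delta_mx j 0.

Lemma dot_ev j (w : 'cV[R]_n) : dot (ev j) w = w j 0.
Proof.
rewrite /dot (bigD1 j) //= big1 => [|i hij]; first by rewrite !mxE !eqxx mul1r addr0.
by rewrite !mxE (negbTE hij) mul0r.
Qed.

Lemma ev_pos j : 0 < dot (ev j) (W *m ev j).
Proof.
have nz : ev j != 0.
  by apply/negP => /eqP /matrixP /(_ j 0); rewrite !mxE !eqxx => /eqP; rewrite oner_eq0.
by have := hW.2 _ nz; rewrite dot_quad.
Qed.

Lemma cvg_posdef (p : nat -> 'cV[R]_n) :
  (fun k => dot (p k) (W *m p k)) @ \oo --> (0:R) ->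
  forall j, (fun k => p k j 0) @ \oo --> (0:R).
Proof.
move=> hP.
have hWp : forall j, (fun k => (W *m p k) j 0) @ \oo --> (0:R).
  move=> j; apply: cvg0_sq.
  have hb := @cvg0_scale R (dot (ev j) (W *m ev j)) _ hP.
  apply: (cvg0_squeeze _ _ _ _ hb) => k; rewrite sqr_ge0 /= -dot_ev.
  exact: cs (ev_pos j).
move=> j.
have := @cvg0_lin R n n (invmx W) (fun k => W *m p k) j hWp.
have e : (fun k => (invmx W *m (W *m p k)) j 0) = (fun k => p k j 0).
  by apply/funext => k; rewrite mulKmx // posdef_unit.
by rewrite e.
Qed.
End PD.

Lemma cvg0_dot (R : realType) (n : nat) (u : nat -> 'cV[R]_n) :
  (forall j, (fun k => u k j 0) @ \oo --> (0:R)) ->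
  (fun k => dot (u k) (u k)) @ \oo --> (0:R).
Proof.
move=> h.
have := @cvg_sum_seq R _ (index_enum 'I_n) (fun j k => u k j 0 * u k j 0) (fun j => 0).
rewrite big1 // => hc.
have hh : forall j, (fun k => u k j 0 * u k j 0) @ \oo --> (0:R).
  move=> j; have := @cvg0_sqr R _ (h j).
  have e : (fun k => u k j 0 ^+ 2) = (fun k => u k j 0 * u k j 0) by apply/funext => k; rewrite expr2.
  by rewrite e.
exact: (hc hh).
Qed.

Theorem theorem2 (R : realType) (n : nat) (W T : 'M[R]_n) (b : 'cV[R[i]]_n)
  (alpha omega : R)
  (hW : sym_posdef W) (hT : sym_possemidef T)
  (hA : (cmx W + 'i%C *: cmx T) \in unitmx)
  (halpha : 0 < alpha) (homega0 : 0 <= omega) (homega2 : omega < 2)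
  (x xh : nat -> 'cV[R[i]]_n)
  (hhalf : forall k : nat,
      ((alpha%:C)%C%:M + cmx W) *m xh k = ((alpha%:C)%C%:M - 'i%C *: cmx T) *m x k + b)
  (hfull : forall k : nat,
      ((alpha%:C)%C%:M + 'i%C *: cmx T) *m x k.+1 =
        ('i%C *: cmx T - (((1 - omega) * alpha)%:C)%C%:M) *m x k
        + (((2 - omega) * alpha)%:C)%C *: xh k) :
  exists xs : 'cV[R[i]]_n,
    [/\ (cmx W + 'i%C *: cmx T) *m xs = b,
        (forall y : 'cV[R[i]]_n, (cmx W + 'i%C *: cmx T) *m y = b -> y = xs)
      & cvg_cvec x xs].
Proof.
set A := cmx W + 'i%C *: cmx T.
pose xs := invmx A *m b.
have hxs : A *m xs = b by rewrite mulKVmx.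
exists xs; split => //.
  by move=> y hy; rewrite /xs -hy mulKmx.
set Sr := re xs; set Si := im xs.
have Xr : W *m Sr - T *m Si = re b.
  have := congr1 re hxs; rewrite /A mulmxDl -scalemxAl reD reI re_cmx im_cmx => <-.
  done.
have Xi : W *m Si + T *m Sr = im b.
  have := congr1 im hxs; rewrite /A mulmxDl -scalemxAl imD imI im_cmx re_cmx => <-.
  done.
have Hr : forall k, alpha *: re (xh k) + W *m re (xh k) = alpha *: re (x k) + T *m im (x k) + re b.
  move=> k; have := congr1 re (hhalf k).
  by rewrite mulmxDl mulmxBl -scalemxAl !(reD, reN, reS, reI, re_cmx, im_cmx) opprK.
have Hi : forall k, alpha *: im (xh k) + W *m im (xh k) = alpha *: im (x k) - T *m re (x k) + im b.
  move=> k; have := congr1 im (hhalf k).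
  by rewrite mulmxDl mulmxBl -scalemxAl !(imD, imN, imS, imI, im_cmx, re_cmx).
have Fr : forall k, alpha *: re (x k.+1) - T *m im (x k.+1) =
   - (T *m im (x k)) - ((1 - omega) * alpha) *: re (x k) + ((2 - omega) * alpha) *: re (xh k).
  move=> k; have := congr1 re (hfull k).
  by rewrite mulmxDl mulmxBl -!scalemxAl !(reD, reN, reS, reZ, reI, re_cmx, im_cmx).
have Fi : forall k, alpha *: im (x k.+1) + T *m re (x k.+1) =
   T *m re (x k) - ((1 - omega) * alpha) *: im (x k) + ((2 - omega) * alpha) *: im (xh k).
  move=> k; have := congr1 im (hfull k).
  by rewrite mulmxDl mulmxBl -!scalemxAl !(imD, imN, imS, imI, im_cmx, re_cmx) imZ.
pose a k := re (x k) - Sr. pose bb k := im (x k) - Si.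
pose p k := re (xh k) - Sr. pose q k := im (xh k) - Si.
have E1 : forall k, alpha *: p k + W *m p k = alpha *: a k + T *m bb k.
  move=> k; have h := Hr k; rewrite /p /a /bb !mulmxBr !scalerBr.
  apply/matrixP => i j; move: (congr1 (fun M : 'cV[R]_n => M i j) h) (congr1 (fun M : 'cV[R]_n => M i j) Xr).
  rewrite !mxE => h1 h2; lra.
have E2 : forall k, alpha *: q k + W *m q k = alpha *: bb k - T *m a k.
  move=> k; have h := Hi k; rewrite /q /a /bb !mulmxBr !scalerBr.
  apply/matrixP => i j; move: (congr1 (fun M : 'cV[R]_n => M i j) h) (congr1 (fun M : 'cV[R]_n => M i j) Xi).
  rewrite !mxE => h1 h2; lra.
have E3 : forall k, alpha *: a k.+1 - T *m bb k.+1 =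
    - (T *m bb k) - ((1 - omega) * alpha) *: a k + ((2 - omega) * alpha) *: p k.
  move=> k; have h := Fr k; rewrite /p /a /bb !mulmxBr !scalerBr.
  apply/matrixP => i j; move: (congr1 (fun M : 'cV[R]_n => M i j) h).
  rewrite !mxE => h1; lra.
have E4 : forall k, alpha *: bb k.+1 + T *m a k.+1 =
    T *m a k - ((1 - omega) * alpha) *: bb k + ((2 - omega) * alpha) *: q k.
  move=> k; have h := Fi k; rewrite /q /a /bb !mulmxBr !scalerBr.
  apply/matrixP => i j; move: (congr1 (fun M : 'cV[R]_n => M i j) h).
  rewrite !mxE => h1; lra.
pose S k := @SF R n T alpha (a k) (bb k).
pose P k := dot (p k) (W *m p k) + dot (q k) (W *m q k).
have hSP : forall k, S k.+1 <= S k - 2 * (2 - omega) * alpha * P k.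
  move=> k; exact: (@energy R n W T hT.1 alpha omega (a k) (bb k) (p k) (q k) (a k.+1) (bb k.+1)
    (E1 k) (E2 k) (E3 k) (E4 k) homega0 (ltW homega2)).
have hPp0 : forall k, 0 <= dot (p k) (W *m p k) by move=> k; exact: psd.
have hPq0 : forall k, 0 <= dot (q k) (W *m q k) by move=> k; exact: psd.
have hP : P @ \oo --> (0:R).
  apply: (@cvg0_energy R S P (2 * (2 - omega) * alpha)) => //.
  - by apply: mulr_gt0 => //; apply: mulr_gt0 => //; lra.
  - by move=> k; apply: addr_ge0; exact: dot_ge0.
  - by move=> k; apply: addr_ge0.
have hPp : (fun k => dot (p k) (W *m p k)) @ \oo --> (0:R).
  apply: (cvg0_squeeze _ _ _ _ hP) => k; rewrite hPp0 /= /P lerDl //.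
have hPq : (fun k => dot (q k) (W *m q k)) @ \oo --> (0:R).
  apply: (cvg0_squeeze _ _ _ _ hP) => k; rewrite hPq0 /= /P lerDr //.
have hp := @cvg_posdef R n W hW p hPp.
have hq := @cvg_posdef R n W hW q hPq.
have entry : forall (u v : 'cV[R]_n) (M : 'M[R]_n) (c : R) j, (c *: u + M *m v) j 0 = c * u j 0 + (M *m v) j 0.
  by move=> u v M c j; rewrite !mxE.
have hG1 : forall j, (fun k => (alpha *: a k + T *m bb k) j 0) @ \oo --> (0:R).
  move=> j; have e : (fun k => (alpha *: a k + T *m bb k) j 0) = (fun k => alpha * p k j 0 + (W *m p k) j 0).
    by apply/funext => k; rewrite -E1 entry.
  rewrite e; apply: cvg0_add; first exact: cvg0_scale.
  exact: (@cvg0_lin R n n W p j hp).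
have hG2 : forall j, (fun k => (alpha *: bb k - T *m a k) j 0) @ \oo --> (0:R).
  move=> j; have e : (fun k => (alpha *: bb k - T *m a k) j 0) = (fun k => alpha * q k j 0 + (W *m q k) j 0).
    by apply/funext => k; rewrite -E2 entry.
  rewrite e; apply: cvg0_add; first exact: cvg0_scale.
  exact: (@cvg0_lin R n n W q j hq).
have hS : S @ \oo --> (0:R).
  have e : S = (fun k => dot (alpha *: a k + T *m bb k) (alpha *: a k + T *m bb k)
                       + dot (alpha *: bb k - T *m a k) (alpha *: bb k - T *m a k)).
    by apply/funext => k; rewrite /S /SF (@dot_FG R n T alpha (a k) (bb k) hT.1).
  rewrite e; apply: cvg0_add; exact: cvg0_dot.
have hF1 : forall j, (fun k => (alpha *: a k - T *m bb k) j 0) @ \oo --> (0:R).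
  move=> j; apply: cvg0_sq; apply: (cvg0_squeeze _ _ _ _ hS) => k.
  rewrite sqr_ge0 /= /S /SF; apply: le_trans (dot_entry _ j) _; rewrite lerDl; exact: dot_ge0.
have hF2 : forall j, (fun k => (alpha *: bb k + T *m a k) j 0) @ \oo --> (0:R).
  move=> j; apply: cvg0_sq; apply: (cvg0_squeeze _ _ _ _ hS) => k.
  rewrite sqr_ge0 /= /S /SF; apply: le_trans (dot_entry _ j) _; rewrite lerDr; exact: dot_ge0.
have a0 : forall j, (fun k => a k j 0) @ \oo --> (0:R).
  move=> j; have e : (fun k => a k j 0) = (fun k => (2 * alpha)^-1 *
      ((alpha *: a k - T *m bb k) j 0 + (alpha *: a k + T *m bb k) j 0)).
    apply/funext => k; rewrite !mxE; field; lra.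
  by rewrite e; apply: cvg0_scale; apply: cvg0_add.
have b0 : forall j, (fun k => bb k j 0) @ \oo --> (0:R).
  move=> j; have e : (fun k => bb k j 0) = (fun k => (2 * alpha)^-1 *
      ((alpha *: bb k + T *m a k) j 0 + (alpha *: bb k - T *m a k) j 0)).
    apply/funext => k; rewrite !mxE; field; lra.
  by rewrite e; apply: cvg0_scale; apply: cvg0_add.
move=> j; split.
  have e : (fun k => complex.Re (x k j 0)) = (fun k => Sr j 0 + a k j 0).
    by apply/funext => k; rewrite /a /Sr !mxE; ring.
  have e2 : complex.Re (xs j 0) = Sr j 0 by rewrite /Sr /re [RHS]mxE.
  rewrite e e2.
  exact: cvg_add_cst.
have e : (fun k => complex.Im (x k j 0)) = (fun k => Si j 0 + bb k j 0).
  by apply/funext => k; rewrite /bb /Si !mxE; ring.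
have e2 : complex.Im (xs j 0) = Si j 0 by rewrite /Si /im [RHS]mxE.
rewrite e e2.
exact: cvg_add_cst.
Qed.
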